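(* Let $G$ be a finitely generated group with decidable word problem and $S$ a finite generating set of $G$. Then the ouroboros problem for $(G,S)$ is in $\Sigma^0_1$.
   Context: The word problem of $G$ with respect to $S$ asks, given a word $w$ over $S\cup S^{-1}$, whether $w$ represents $1_G$. A tileset graph for $(G,S)$ is a finite multigraph $\Gamma=(A,B)$ whose edges are triples $(a,a',s)$ with $a,a'\in A$, $s\in S\cup S^{-1}$, such that $(a,a',s)\in B$ implies $(a',a,s^{-1})\in B$. A $\Gamma$-ouroboros is a pair $(\omega,\zeta)$ with $\omega:\{0,\dots,n\}\to G$, $n\ge 3$, injective on $\{0,\dots,n-1\}$ with $\omega(n)=\omega(0)$, and $\zeta:\{0,\dots,n\}\to A$, such that for $0\le i<n$: $d\omega_i:=\omega(i)^{-1}\omega(i+1)\in S\cup S^{-1}$ and $(\zeta(i),\zeta(i+1),d\omega_i)\in B$. The ouroboros problem for $(G,S)$: given $\Gamma$, decide whether a $\Gamma$-ouroboros exists. *)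

(* Defs.v *)
From mathcomp Require Import all_boot.
Set Implicit Arguments. Unset Strict Implicit. Unset Printing Implicit Defensive.

(* Model of computation: partial (mu-)recursive functions on nat.      *)
Inductive prf : Type :=
  | PZero : prf
  | PSucc : prf
  | PProj : nat -> prf
  | PComp : prf -> seq prf -> prf
  | PPrec : prf -> prf -> prf
  | PMu   : prf -> prf.

Inductive peval : prf -> seq nat -> nat -> Prop :=
  | ev_zero v : peval PZero v 0
  | ev_succ x v : peval PSucc (x :: v) x.+1
  | ev_proj i v : i < size v -> peval (PProj i) v (nth 0 v i)
  | ev_comp f gs v ws y :
      pevals gs v ws -> peval f ws y -> peval (PComp f gs) v y
  | ev_prec0 f g v y : peval f v y -> peval (PPrec f g) (0 :: v) y
  | ev_precS f g n v r y :
      peval (PPrec f g) (n :: v) r -> peval g (n :: r :: v) y ->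
      peval (PPrec f g) (n.+1 :: v) y
  | ev_mu f v n :
      peval f (n :: v) 0 ->
      (forall m, m < n -> exists k, peval f (m :: v) k.+1) ->
      peval (PMu f) v n
with pevals : seq prf -> seq nat -> seq nat -> Prop :=
  | evs_nil v : pevals [::] v [::]
  | evs_cons g gs v y ys :
      peval g v y -> pevals gs v ys -> pevals (g :: gs) v (y :: ys).

Definition decidable_set (P : nat -> Prop) : Prop :=
  exists f : prf, forall n,
    (P n /\ peval f [:: n] 1) \/ (~ P n /\ peval f [:: n] 0).

Definition sigma01 (P : nat -> Prop) : Prop :=
  exists f : prf, forall n, P n <-> exists y, peval f [:: n] y.

(* Encodings of finite data as natural numbers (Cantor pairing).       *)
Definition cpair (x y : nat) : nat := ((x + y) * (x + y).+1) %/ 2 + y.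

Fixpoint code_list (l : seq nat) : nat :=
  if l is x :: l' then (cpair x (code_list l')).+1 else 0.

(* A letter of the alphabet S u S^{-1}: (i, false) stands for s_i and
   (i, true) for s_i^{-1}. *)
Definition letter := (nat * bool)%type.
Definition code_letter (l : letter) : nat := (2 * l.1 + l.2)%N.
Definition inv_letter (l : letter) : letter := (l.1, ~~ l.2).

Definition code_word (w : seq letter) : nat := code_list (map code_letter w).

Definition edge := (nat * nat * letter)%type.
Definition code_edge (e : edge) : nat :=
  cpair e.1.1 (cpair e.1.2 (code_letter e.2)).
Definition code_graph (B : seq edge) : nat := code_list (map code_edge B).

Record is_group (G : Type) (mul : G -> G -> G) (one : G) (inv : G -> G)
  : Prop := IsGroup {
  mulA : forall x y z, mul x (mul y z) = mul (mul x y) z;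
  mul1g : forall x, mul one x = x;
  mulVg : forall x, mul (inv x) x = one
}.

Section GroupDefs.
Variables (G : Type) (mul : G -> G -> G) (one : G) (inv : G -> G).
Variable S : seq G.

Definition valid_letter (l : letter) : bool := l.1 < size S.

Definition letter_val (l : letter) : G :=
  if l.2 then inv (nth one S l.1) else nth one S l.1.

Definition word_val (w : seq letter) : G :=
  foldr (fun l acc => mul (letter_val l) acc) one w.

Definition generates : Prop :=
  forall g : G, exists w : seq letter, all valid_letter w /\ word_val w = g.

Definition word_problem (n : nat) : Prop :=
  exists w : seq letter,
    n = code_word w /\ all valid_letter w /\ word_val w = one.

Definition tileset_graph (B : seq edge) : Prop :=
  (forall e, e \in B -> valid_letter e.2) /\
  (forall a a' l, (a, a', l) \in B -> (a', a, inv_letter l) \in B).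

Definition has_ouroboros (B : seq edge) : Prop :=
  exists (n : nat) (om : nat -> G) (ze : nat -> nat),
    3 <= n /\
    (forall i j, i < n -> j < n -> om i = om j -> i = j) /\
    om n = om 0 /\
    (forall i, i < n ->
       exists l : letter, valid_letter l /\
         mul (inv (om i)) (om i.+1) = letter_val l /\
         (ze i, ze i.+1, l) \in B).

Definition ouroboros_problem (n : nat) : Prop :=
  exists B : seq edge,
    n = code_graph B /\ tileset_graph B /\ has_ouroboros B.

End GroupDefs.

(* Main.v *)
Require Import Defs.
From mathcomp Require Import all_boot.
From mathcomp Require Import zify.
From Stdlib Require Import ClassicalEpsilon.
Set Implicit Arguments. Unset Strict Implicit.

Fixpoint peval_det p v y (d : peval p v y) {struct d} : forall y', peval p v y' -> y = y'
with pevals_det gs v ys (d : pevals gs v ys) {struct d} : forall ys', pevals gs v ys' -> ys = ys'.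
Proof.
- case: d.
  + by move=> v0 y' H; inversion H.
  + by move=> x v0 y' H; inversion H.
  + by move=> i v0 _ y' H; inversion H.
  + move=> f gs v0 ws y0 Hs Hf y' H; inversion H; subst.
    match goal with Hx : pevals gs v0 _ |- _ => have E := pevals_det _ _ _ Hs _ Hx end; subst.
    match goal with Hx : peval f _ _ |- _ => exact: (peval_det _ _ _ Hf _ Hx) end.
  + move=> f g v0 y0 Hf y' H; inversion H; subst.
    match goal with Hx : peval f _ _ |- _ => exact: (peval_det _ _ _ Hf _ Hx) end.
  + move=> f g n v0 r y0 Hr Hg y' H; inversion H; subst.
    match goal with Hx : peval (PPrec f g) _ _ |- _ => have E := peval_det _ _ _ Hr _ Hx end; subst.
    match goal with Hx : peval g _ _ |- _ => exact: (peval_det _ _ _ Hg _ Hx) end.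
  + move=> f v0 n H0 Hlt y' H.
    inversion H as [| | | | | |f' v' n' Hz Hl]; subst.
    case: (ltngtP n y') => // [lt|lt].
    * case: (Hl n lt) => k Hk; by have := peval_det _ _ _ H0 _ Hk.
    * case: (Hlt y' lt) => k Hk; by have := peval_det _ _ _ Hk _ Hz.
- case: d.
  + by move=> v0 ys' H; inversion H.
  + move=> g gs0 v0 y0 ys0 Hg Hgs ys' H; inversion H; subst.
    match goal with Hx : peval g _ _, Hy : pevals gs0 _ _ |- _ =>
    by rewrite (peval_det _ _ _ Hg _ Hx) (pevals_det _ _ _ Hgs _ Hy) end.
Qed.

Definition C (k : nat) (h : seq nat -> nat) :=
  exists p, forall v, size v = k -> peval p v (h v).

Lemma C_ext k h h' : (forall v, size v = k -> h v = h' v) -> C k h -> C k h'.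
Proof. move=> E [p Hp]; exists p => v Hv; rewrite -E //; exact: Hp. Qed.

Fixpoint allC k (gs : seq (seq nat -> nat)) : Prop :=
  if gs is g :: gs' then C k g /\ allC k gs' else True.

Lemma allC_progs k gs : allC k gs ->
  exists ps, forall v, size v = k -> pevals ps v (map (fun g => g v) gs).
Proof.
elim: gs => [|g gs IH] /=; first by exists [::] => v _; constructor.
case=> [[p Hp] /IH [ps Hps]]; exists (p :: ps) => v Hv; constructor; auto.
Qed.

Lemma C_comp k f gs : C (size gs) f -> allC k gs ->
  C k (fun v => f (map (fun g => g v) gs)).
Proof.
move=> [pf Hf] /allC_progs [ps Hps]; exists (PComp pf ps) => v Hv.
econstructor; first exact: Hps.
by apply: Hf; rewrite size_map.
Qed.

Lemma C_var k i : i < k -> C k (fun v => nth 0 v i).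
Proof. move=> ik; exists (PProj i) => v Hv; constructor; by rewrite Hv. Qed.

Lemma C_zero k : C k (fun _ => 0).
Proof. exists PZero => v _; constructor. Qed.

Lemma C_S k a : C k a -> C k (fun v => (a v).+1).
Proof.
move=> [pa Ha]; exists (PComp PSucc [:: pa]) => v Hv.
econstructor; first by constructor; [exact: Ha|constructor].
constructor.
Qed.

Lemma C_const k c : C k (fun _ => c).
Proof. elim: c => [|c IH]; [exact: C_zero | exact: C_S]. Qed.

Lemma pevals_proj s j n : j + n <= size s ->
  pevals (map PProj (iota j n)) s (map (nth 0 s) (iota j n)).
Proof.
elim: n j => [|n IH] j H /=; first by constructor.
constructor; first by constructor; lia.
apply: IH; lia.
Qed.

Lemma C_reidx k m a (sel : seq nat) : C m a -> size sel = m -> all (fun i => i < k) sel ->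
  C k (fun u => a (map (nth 0 u) sel)).
Proof.
move=> [pa Ha] Hs Hall; exists (PComp pa (map PProj sel)) => v Hv.
econstructor; last by apply: Ha; rewrite size_map.
elim: sel Hall {Hs} => [|i sel IH] /=; first by constructor.
case/andP=> Hi Hr; constructor; [constructor; by rewrite Hv | exact: IH].
Qed.

Lemma drop_iota (u : seq nat) j : drop j u = map (nth 0 u) (iota j (size u - j)).
Proof.
rewrite -[in LHS](mkseq_nth 0 (drop j u)) size_drop /mkseq.
have -> : iota j (size u - j) = iota (j + 0) (size u - j) by rewrite addn0.
rewrite iotaDl -map_comp.
by apply: eq_map => i /=; rewrite nth_drop.
Qed.

Lemma C_lift k j a : C k a -> C (j + k) (fun u => a (drop j u)).
Proof.
move=> Ca; apply: (C_ext (h := fun u => a (map (nth 0 u) (iota j k)))).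
  by move=> v Hv; rewrite drop_iota Hv addKn.
apply: C_reidx => //; first by rewrite size_iota.
apply/allP => i; rewrite mem_iota; lia.
Qed.

Fixpoint precf (f g : seq nat -> nat) n v :=
  if n is n'.+1 then g [:: n', precf f g n' v & v] else f v.

Lemma C_rec k (b f g : seq nat -> nat) (h : nat -> seq nat -> nat) :
  C k b -> C k f -> C k.+2 g -> (forall v, h 0 v = f v) ->
  (forall n v, h n.+1 v = g [:: n, h n v & v]) -> C k (fun v => h (b v) v).
Proof.
move=> [pb Hb] [pf Hf] [pg Hg] h0 hS.
have E : forall n v, h n v = precf f g n v.
  by elim=> [|n IH] v /=; rewrite ?h0 // hS IH.
have HP : forall n v, size v = k -> peval (PPrec pf pg) (n :: v) (precf f g n v).
  elim=> [|n IH] v Hv /=; first by constructor; apply: Hf.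
  econstructor; first exact: IH.
  by apply: Hg; rewrite /= Hv.
exists (PComp (PPrec pf pg) (pb :: map PProj (iota 0 k))) => v Hv.
econstructor.
  constructor; first exact: Hb.
  by apply: pevals_proj; rewrite Hv.
have -> : map (nth 0 v) (iota 0 k) = v by rewrite -Hv -/(mkseq _ _) mkseq_nth.
by rewrite E; apply: HP.
Qed.

Lemma app1 k (f : nat -> nat) a : C 1 (fun u => f (nth 0 u 0)) -> C k a -> C k (fun v => f (a v)).
Proof. move=> Cf Ca; exact: (C_comp (gs := [:: a]) Cf). Qed.
Lemma app2 k (f : nat -> nat -> nat) a b : C 2 (fun u => f (nth 0 u 0) (nth 0 u 1)) ->
  C k a -> C k b -> C k (fun v => f (a v) (b v)).
Proof. move=> Cf Ca Cb; exact: (C_comp (gs := [:: a; b]) Cf). Qed.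
Lemma app3 k (f : nat -> nat -> nat -> nat) a b c :
  C 3 (fun u => f (nth 0 u 0) (nth 0 u 1) (nth 0 u 2)) ->
  C k a -> C k b -> C k c -> C k (fun v => f (a v) (b v) (c v)).
Proof. move=> Cf Ca Cb Cc; exact: (C_comp (gs := [:: a; b; c]) Cf). Qed.

Lemma C_shift1 k F : C k.+1 F -> C k.+2 (fun u => F (nth 0 u 0 :: drop 2 u)).
Proof.
move=> CF; apply: (C_ext (h := fun u => F (map (nth 0 u) (0 :: iota 2 k)))).
  by move=> u Hu /=; rewrite drop_iota Hu; have -> : k.+2 - 2 = k by lia.
apply: C_reidx => //=; first by rewrite size_iota.
apply/allP => i; rewrite mem_iota; lia.
Qed.

Lemma C_add k a b : C k a -> C k b -> C k (fun v => a v + b v).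
Proof.
move=> Ca Cb; apply: (C_rec (h := fun n v => a v + n) (g := fun u => (nth 0 u 1).+1) Cb Ca).
- by apply: C_S; apply: C_var.
- by move=> v /=; rewrite addn0.
- by move=> n v /=; rewrite addnS.
Qed.

Lemma C_pred k a : C k a -> C k (fun v => (a v).-1).
Proof.
move=> Ca; apply: (C_rec (h := fun n v => n.-1) (g := fun u => nth 0 u 0) Ca (C_zero k)) => //.
exact: C_var.
Qed.

Lemma C_sub k a b : C k a -> C k b -> C k (fun v => a v - b v).
Proof.
move=> Ca Cb; apply: (C_rec (h := fun n v => a v - n) (g := fun u => (nth 0 u 1).-1) Cb Ca).
- by apply: C_pred; apply: C_var.
- by move=> v /=; rewrite subn0.
- by move=> n v /=; rewrite subnS.
Qed.

Lemma C_mul k a b : C k a -> C k b -> C k (fun v => a v * b v).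
Proof.
move=> Ca Cb; apply: (C_rec (h := fun n v => a v * n) (g := fun u => nth 0 u 1 + a (drop 2 u)) Cb (C_zero k)).
- apply: C_add; first exact: C_var.
  exact: (C_lift 2 Ca).
- by move=> v /=; rewrite muln0.
- by move=> n v /=; rewrite drop0 mulnS addnC.
Qed.

Notation CB k P := (C k (fun v => nat_of_bool (P v))).

Lemma CB_eq0 k a : C k a -> CB k (fun v => a v == 0).
Proof.
move=> Ca; apply: (C_rec (h := fun n v => nat_of_bool (n == 0)) (g := fun _ => 0) Ca (C_const k 1)) => //.
exact: C_zero.
Qed.

Lemma CB_eq k a b : C k a -> C k b -> CB k (fun v => a v == b v).
Proof.
move=> Ca Cb; apply: (C_ext (h := fun v => nat_of_bool ((a v - b v) + (b v - a v) == 0))).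
  move=> v _; congr nat_of_bool; apply/eqP/eqP; lia.
by apply: CB_eq0; apply: C_add; apply: C_sub.
Qed.

Lemma CB_leq k a b : C k a -> C k b -> CB k (fun v => a v <= b v).
Proof.
move=> Ca Cb; apply: (C_ext (h := fun v => nat_of_bool (a v - b v == 0))).
  by move=> v _; rewrite subn_eq0.
by apply: CB_eq0; apply: C_sub.
Qed.

Lemma CB_ltn k a b : C k a -> C k b -> CB k (fun v => a v < b v).
Proof. by move=> Ca Cb; apply: CB_leq => //; apply: C_S. Qed.

Lemma CB_and k P Q : CB k P -> CB k Q -> CB k (fun v => P v && Q v).
Proof.
move=> CP CQ; apply: (C_ext (h := fun v => nat_of_bool (P v) * nat_of_bool (Q v))).
  by move=> v _; case: (P v); case: (Q v).
exact: C_mul.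
Qed.

Lemma CB_not k P : CB k P -> CB k (fun v => ~~ P v).
Proof.
move=> CP; apply: (C_ext (h := fun v => 1 - nat_of_bool (P v))).
  by move=> v _; case: (P v).
apply: C_sub => //; exact: C_const.
Qed.

Lemma CB_or k P Q : CB k P -> CB k Q -> CB k (fun v => P v || Q v).
Proof.
move=> CP CQ; apply: (C_ext (h := fun v => nat_of_bool (~~ (~~ P v && ~~ Q v)))).
  by move=> v _; case: (P v); case: (Q v).
by apply: CB_not; apply: CB_and; apply: CB_not.
Qed.

Lemma CB_impl k P Q : CB k P -> CB k Q -> CB k (fun v => P v ==> Q v).
Proof.
move=> CP CQ; apply: (C_ext (h := fun v => nat_of_bool (~~ P v || Q v))).
  by move=> v _; case: (P v); case: (Q v).
by apply: CB_or => //; apply: CB_not.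
Qed.

Lemma CB_odd k a : C k a -> CB k (fun v => odd (a v)).
Proof.
move=> Ca; apply: (C_rec (h := fun n v => nat_of_bool (odd n)) (g := fun u => 1 - nth 0 u 1) Ca (C_zero k)) => //.
  by apply: C_sub; [apply: C_const | apply: C_var].
by move=> n v /=; case: (odd n).
Qed.

Lemma C_if k P a b : CB k P -> C k a -> C k b -> C k (fun v => if P v then a v else b v).
Proof.
move=> CP Ca Cb; apply: (C_ext (h := fun v => nat_of_bool (P v) * a v + nat_of_bool (~~ P v) * b v)).
  by move=> v _; case: (P v) => /=; rewrite ?mul1n ?mul0n ?addn0.
by apply: C_add; apply: C_mul => //; apply: CB_not.
Qed.

Fixpoint bsum n (F : nat -> nat) := if n is n'.+1 then bsum n' F + F n' else 0.
Fixpoint ball n (P : nat -> bool) := if n is n'.+1 then ball n' P && P n' else true.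
Fixpoint bex n (P : nat -> bool) := if n is n'.+1 then bex n' P || P n' else false.

Lemma C_bsum k b F G : C k b -> C k.+1 F -> (forall v i, G v i = F (i :: v)) ->
  C k (fun v => bsum (b v) (G v)).
Proof.
move=> Cb CF EG; apply: (C_rec (h := fun n v => bsum n (G v)) (g := fun u => nth 0 u 1 + F (nth 0 u 0 :: drop 2 u)) Cb (C_zero k)) => //.
  apply: C_add; first exact: C_var.
  exact: C_shift1.
by move=> n v /=; rewrite drop0 EG.
Qed.

Lemma CB_ball k b P Q : C k b -> CB k.+1 P -> (forall v i, Q v i = P (i :: v)) ->
  CB k (fun v => ball (b v) (Q v)).
Proof.
move=> Cb CP EQ; apply: (C_rec (h := fun n v => nat_of_bool (ball n (Q v))) (g := fun u => nth 0 u 1 * P (nth 0 u 0 :: drop 2 u)) Cb (C_const k 1)) => //.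
  apply: C_mul; first exact: C_var.
  exact: (C_shift1 CP).
by move=> n v /=; rewrite drop0 EQ; case: (ball n _); case: (P _).
Qed.

Lemma CB_bex k b P Q : C k b -> CB k.+1 P -> (forall v i, Q v i = P (i :: v)) ->
  CB k (fun v => bex (b v) (Q v)).
Proof.
move=> Cb CP EQ; apply: (C_rec (h := fun n v => nat_of_bool (bex n (Q v))) (g := fun u => nat_of_bool ((0 < nth 0 u 1) || P (nth 0 u 0 :: drop 2 u))) Cb (C_const k 0)) => //.
  apply: CB_or; first by apply: CB_ltn; [apply: C_const | apply: C_var].
  exact: (C_shift1 CP).
by move=> n v /=; rewrite drop0 EQ; case: (bex n _); case: (P _).
Qed.

Lemma ballP n (P : nat -> bool) : reflect (forall i, i < n -> P i) (ball n P).
Proof.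
elim: n => [|n IH] /=; first by constructor.
apply: (iffP andP).
  case=> /IH H Hn i; rewrite ltnS leq_eqVlt; case/orP; [by move/eqP->|exact: H].
by move=> H; split; [apply/IH => i Hi; apply: H; lia | apply: H].
Qed.

Lemma bexP n (P : nat -> bool) : reflect (exists2 i, i < n & P i) (bex n P).
Proof.
elim: n => [|n IH] /=; first by constructor; case.
apply: (iffP orP).
  by case=> [/IH [i Hi Pi]|Pn]; [exists i => //; lia | exists n].
case=> i; rewrite ltnS leq_eqVlt; case/orP => [/eqP-> ->|Hi Pi]; first by right.
by left; apply/IH; exists i.
Qed.

Lemma bsum_zero n F : (forall x, x < n -> F x = 0) -> bsum n F = 0.
Proof. elim: n => [//|n IH] H /=; rewrite IH ?H //; move=> x Hx; apply: H; lia. Qed.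

Lemma bsum_single n F a : a < n -> (forall x, x < n -> x != a -> F x = 0) -> bsum n F = F a.
Proof.
elim: n => [//|n IH] Ha H /=.
have [lt|ge] := ltnP a n.
  rewrite IH //; last by move=> x Hx; apply: H; lia.
  rewrite (H n) ?addn0 //; apply/eqP; lia.
have E : a = n by lia.
subst a; rewrite bsum_zero // => x Hx; apply: H; [lia | apply/eqP; lia].
Qed.

Fixpoint Tf s := if s is s'.+1 then Tf s' + s'.+1 else 0.

Lemma TfE s : Tf s = s * s.+1 %/ 2.
Proof.
elim: s => [//|s IH] /=.
have -> : s.+1 * s.+2 = s.+1 * 2 + s * s.+1 by nia.
by rewrite divnMDl // IH addnC.
Qed.

Lemma cpairE x y : cpair x y = Tf (x + y) + y.
Proof. by rewrite /cpair TfE. Qed.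

Lemma Tf_mono m n : m <= n -> Tf m <= Tf n.
Proof.
move=> H; rewrite -(subnKC H); elim: (n - m) => [|d IH]; first by rewrite addn0.
rewrite addnS /=; lia.
Qed.

Lemma Tf_ge s : s <= Tf s.
Proof. elim: s => [//|s IH] /=; lia. Qed.

Lemma cpair_inj x y x' y' : cpair x y = cpair x' y' -> x = x' /\ y = y'.
Proof.
rewrite !cpairE => E.
have Hs : x + y = x' + y'.
  case: (ltngtP (x + y) (x' + y')) => // H.
  - have H2 := Tf_mono H; simpl in H2; lia.
  - have H2 := Tf_mono H; simpl in H2; lia.
rewrite Hs in E; lia.
Qed.

Lemma cpair_geL x y : x <= cpair x y.
Proof. rewrite cpairE; have := Tf_ge (x + y); lia. Qed.
Lemma cpair_geR x y : y <= cpair x y.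
Proof. rewrite cpairE; lia. Qed.

Lemma cpair_surj z : exists x y, cpair x y = z.
Proof.
elim: z => [|z [x [y E]]]; first by exists 0, 0.
case: x E => [|x] E.
  exists y.+1, 0; move: E; rewrite !cpairE add0n !addn0 /= => <-; lia.
exists x, y.+1; move: E; rewrite !cpairE => <-.
have -> : x + y.+1 = x.+1 + y by lia.
lia.
Qed.

Definition pi1 z := bsum z.+1 (fun x => x * bex z.+1 (fun y => cpair x y == z)).
Definition pi2 z := bsum z.+1 (fun y => y * bex z.+1 (fun x => cpair x y == z)).

Lemma pi1_cpair x y : pi1 (cpair x y) = x.
Proof.
rewrite /pi1 (@bsum_single _ _ x); last first.
- move=> x' _ Hne; case: bexP; last by rewrite muln0.
  by case=> y' _ /eqP /cpair_inj [E _]; move: Hne; rewrite E eqxx.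
- by rewrite ltnS cpair_geL.
case: bexP; first by rewrite muln1.
by case; exists y => //; rewrite ltnS cpair_geR.
Qed.

Lemma pi2_cpair x y : pi2 (cpair x y) = y.
Proof.
rewrite /pi2 (@bsum_single _ _ y); last first.
- move=> y' _ Hne; case: bexP; last by rewrite muln0.
  by case=> x' _ /eqP /cpair_inj [_ E]; move: Hne; rewrite E eqxx.
- by rewrite ltnS cpair_geR.
case: bexP; first by rewrite muln1.
by case; exists x => //; rewrite ltnS cpair_geL.
Qed.

Lemma C_Tf k a : C k a -> C k (fun v => Tf (a v)).
Proof.
move=> Ca; apply: (C_rec (h := fun n v => Tf n) (g := fun u => nth 0 u 1 + (nth 0 u 0).+1) Ca (C_zero k)) => //.
apply: C_add; [apply: (C_var (i:=1)) | apply: C_S; apply: (C_var (i:=0))] => //.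
Qed.

Lemma C_cpair k a b : C k a -> C k b -> C k (fun v => cpair (a v) (b v)).
Proof.
move=> Ca Cb; apply: (C_ext (h := fun v => Tf (a v + b v) + b v)).
  by move=> v _; rewrite cpairE.
by apply: C_add => //; apply: C_Tf; apply: C_add.
Qed.

Lemma C_pi1 k a : C k a -> C k (fun v => pi1 (a v)).
Proof.
apply: app1; rewrite /pi1.
apply: (C_bsum (F := fun w => nth 0 w 0 * bex (nth 0 w 1).+1 (fun y => cpair (nth 0 w 0) y == nth 0 w 1))) => //.
  by apply: C_S; apply: (C_var (i:=0)).
apply: C_mul; first by apply: (C_var (i:=0)).
apply: (CB_bex (P := fun t => cpair (nth 0 t 1) (nth 0 t 0) == nth 0 t 2)) => //.
  by apply: C_S; apply: (C_var (i:=1)).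
by apply: CB_eq; [apply: C_cpair; [apply: (C_var (i:=1)) | apply: (C_var (i:=0))] | apply: (C_var (i:=2))].
Qed.

Lemma C_pi2 k a : C k a -> C k (fun v => pi2 (a v)).
Proof.
apply: app1; rewrite /pi2.
apply: (C_bsum (F := fun w => nth 0 w 0 * bex (nth 0 w 1).+1 (fun x => cpair x (nth 0 w 0) == nth 0 w 1))) => //.
  by apply: C_S; apply: (C_var (i:=0)).
apply: C_mul; first by apply: (C_var (i:=0)).
apply: (CB_bex (P := fun t => cpair (nth 0 t 0) (nth 0 t 1) == nth 0 t 2)) => //.
  by apply: C_S; apply: (C_var (i:=1)).
by apply: CB_eq; [apply: C_cpair; [apply: (C_var (i:=0)) | apply: (C_var (i:=1))] | apply: (C_var (i:=2))].
Qed.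

Definition hd t := pi1 t.-1.
Definition tl t := pi2 t.-1.
Definition tlk k t := iter k tl t.
Definition elem t k := hd (tlk k t).
Definition memc t c := bex t (fun k => (tlk k t != 0) && (elem t k == c)).

Lemma cpair00 : cpair 0 0 = 0. Proof. by rewrite cpairE. Qed.

Lemma tl_code s : tl (code_list s) = code_list (behead s).
Proof.
case: s => [|x s] /=; last by rewrite /tl /= pi2_cpair.
by rewrite /tl /= -cpair00 pi2_cpair cpair00.
Qed.

Lemma hd_code x s : hd (code_list (x :: s)) = x.
Proof. by rewrite /hd /= pi1_cpair. Qed.

Lemma tlk_code k s : tlk k (code_list s) = code_list (drop k s).
Proof.
elim: k s => [|k IH] s; first by rewrite drop0.
rewrite /tlk iterSr -/(tlk k _) tl_code IH.
by case: s.
Qed.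

Lemma code_list0 s : (code_list s == 0) = (s == [::]).
Proof. by case: s. Qed.

Lemma size_code s : size s <= code_list s.
Proof. elim: s => [//|x s IH] /=; have := cpair_geR x (code_list s); lia. Qed.

Lemma elem_code s k : k < size s -> elem (code_list s) k = nth 0 s k.
Proof. by move=> Hk; rewrite /elem tlk_code (drop_nth 0 Hk) hd_code. Qed.

Lemma memc_code s c : memc (code_list s) c = (c \in s).
Proof.
apply/bexP/idP.
  case=> k _ /andP []; rewrite tlk_code code_list0 => Hk /eqP <-.
  have Hk' : k < size s by move: Hk; rewrite -size_eq0 size_drop subn_eq0 -ltnNge.
  by rewrite elem_code // mem_nth.
move/(nthP 0) => [k Hk <-]; exists k.
  exact: (leq_trans Hk (size_code s)).
by rewrite tlk_code code_list0 elem_code // eqxx andbT -size_eq0 size_drop subn_eq0 -ltnNge.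
Qed.

Fixpoint subc L j d := if d is d'.+1 then (cpair (elem L (j - d)) (subc L j d')).+1 else 0.

Lemma subcE L j d : d <= j -> subc L j d = code_list [seq elem L t | t <- iota (j - d) d].
Proof.
elim: d => [//|d IH] Hd /=; rewrite IH; last by lia.
by have -> : (j - d.+1).+1 = j - d by lia.
Qed.

Lemma C_tl k a : C k a -> C k (fun v => tl (a v)).
Proof. by move=> Ca; apply: C_pi2; apply: C_pred. Qed.
Lemma C_hd k a : C k a -> C k (fun v => hd (a v)).
Proof. by move=> Ca; apply: C_pi1; apply: C_pred. Qed.

Lemma C_tlk k a b : C k a -> C k b -> C k (fun v => tlk (a v) (b v)).
Proof.
move=> Ca Cb; apply: (C_rec (h := fun n v => tlk n (b v)) (g := fun u => tl (nth 0 u 1)) Ca Cb) => //.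
by apply: C_tl; apply: (C_var (i:=1)).
Qed.

Lemma C_elem k a b : C k a -> C k b -> C k (fun v => elem (a v) (b v)).
Proof. by move=> Ca Cb; apply: C_hd; apply: C_tlk. Qed.

Lemma CB_memc k a b : C k a -> C k b -> CB k (fun v => memc (a v) (b v)).
Proof.
move=> Ca Cb; apply: (app2 (f := fun x y => nat_of_bool (memc x y))) => //.
apply: (CB_bex (P := fun t => (tlk (nth 0 t 0) (nth 0 t 1) != 0) && (elem (nth 0 t 1) (nth 0 t 0) == nth 0 t 2))) => //.
  exact: (C_var (i:=0)).
apply: CB_and.
  by apply: CB_not; apply: CB_eq; [apply: C_tlk; [apply: (C_var (i:=0))|apply: (C_var (i:=1))] | apply: C_const].
by apply: CB_eq; [apply: C_elem; [apply: (C_var (i:=1))|apply: (C_var (i:=0))] | apply: (C_var (i:=2))].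
Qed.

Lemma C_subc k L j d : C k L -> C k j -> C k d -> C k (fun v => subc (L v) (j v) (d v)).
Proof.
move=> CL Cj Cd.
apply: (C_rec (h := fun n v => subc (L v) (j v) n)
  (g := fun u => (cpair (elem (L (drop 2 u)) (j (drop 2 u) - (nth 0 u 0).+1)) (nth 0 u 1)).+1) Cd (C_zero k)) => //.
apply: C_S; apply: C_cpair; last exact: (C_var (i:=1)).
apply: C_elem; first exact: (C_lift 2 CL).
apply: C_sub; first exact: (C_lift 2 Cj).
  by apply: C_S; apply: (C_var (i:=0)).
by move=> n v /=; rewrite drop0.
Qed.

Definition validc (N c : nat) := c < 2 * N.
Definition invc c := if odd c then c.-1 else c.+1.
Definition edgec a a' c := cpair a (cpair a' c).
Definition tsg N n := ball n (fun k => (tlk k n != 0) ==>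
   (validc N (pi2 (pi2 (elem n k))) &&
    memc n (edgec (pi1 (pi2 (elem n k))) (pi1 (elem n k)) (invc (pi2 (pi2 (elem n k))))))).
Definition acc N (wpf : nat -> nat) n w :=
  (3 <= pi1 w) && tsg N n &&
  ball (pi1 w) (fun i => validc N (elem (pi1 (pi2 w)) i) &&
     memc n (edgec (elem (pi2 (pi2 w)) i) (elem (pi2 (pi2 w)) i.+1) (elem (pi1 (pi2 w)) i))) &&
  ball (pi1 w) (fun j => ball j (fun i => wpf (subc (pi1 (pi2 w)) j (j - i)) == 0)) &&
  (wpf (subc (pi1 (pi2 w)) (pi1 w) (pi1 w)) == 1).

Lemma CB_validc k N a : C k a -> CB k (fun v => validc N (a v)).
Proof. by move=> Ca; apply: CB_ltn => //; apply: C_const. Qed.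

Lemma C_invc k a : C k a -> C k (fun v => invc (a v)).
Proof. by move=> Ca; apply: C_if; [apply: CB_odd | apply: C_pred | apply: C_S]. Qed.

Ltac cc1 := match goal with
 | |- C _ (fun _ => ?c) => apply: C_const
 | |- C _ (fun v => nth 0 v _) => apply: C_var; done
 | |- C _ (fun _ => nat_of_bool (_ && _)) => apply: CB_and
 | |- C _ (fun _ => nat_of_bool (_ || _)) => apply: CB_or
 | |- C _ (fun _ => nat_of_bool (_ ==> _)) => apply: CB_impl
 | |- C _ (fun _ => nat_of_bool (~~ _)) => apply: CB_not
 | |- C _ (fun _ => nat_of_bool (_ == _)) => apply: CB_eq
 | |- C _ (fun _ => nat_of_bool (_ <= _)) => apply: CB_leq
 | |- C _ (fun _ => nat_of_bool (validc _ _)) => apply: CB_validc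
 | |- C _ (fun _ => nat_of_bool (memc _ _)) => apply: CB_memc
 | |- C _ (fun _ => pi1 _) => apply: C_pi1
 | |- C _ (fun _ => pi2 _) => apply: C_pi2
 | |- C _ (fun _ => elem _ _) => apply: C_elem
 | |- C _ (fun _ => subc _ _ _) => apply: C_subc
 | |- C _ (fun _ => S _) => apply: C_S
 | |- C _ (fun _ => _ + _) => apply: C_add
 | |- C _ (fun _ => _ - _) => apply: C_sub
 | |- C _ (fun _ => _ * _) => apply: C_mul
 | |- C _ (fun _ => cpair _ _) => apply: C_cpair
 | |- C _ (fun _ => invc _) => apply: C_invc
 | |- C _ (fun _ => tlk _ _) => apply: C_tlk
 | |- C _ (fun _ => predn _) => apply: C_pred
 end.
Ltac cc := repeat cc1.

Lemma C_acc N wpf : C 1 (fun u => wpf (nth 0 u 0)) ->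
  CB 2 (fun v => acc N wpf (nth 0 v 1) (nth 0 v 0)).
Proof.
move=> Cw.
have C_wpf : forall k a, C k a -> C k (fun v => wpf (a v)) by move=> k a Ca; exact: app1 Cw Ca.
rewrite /acc /edgec.
apply: CB_and; [apply: CB_and; [apply: CB_and; [apply: CB_and|]|]|].
- cc.
- rewrite /tsg.
  apply: (CB_ball (P := fun t => (tlk (nth 0 t 0) (nth 0 t 2) != 0) ==>
   (validc N (pi2 (pi2 (elem (nth 0 t 2) (nth 0 t 0)))) &&
    memc (nth 0 t 2) (cpair (pi1 (pi2 (elem (nth 0 t 2) (nth 0 t 0)))) (cpair (pi1 (elem (nth 0 t 2) (nth 0 t 0))) (invc (pi2 (pi2 (elem (nth 0 t 2) (nth 0 t 0)))))))))) => //.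
  + exact: (C_var (i:=1)).
  + cc.
- eapply (CB_ball (P := fun t => validc N (elem (pi1 (pi2 (nth 0 t 1))) (nth 0 t 0)) &&
     memc (nth 0 t 2) (cpair (elem (pi2 (pi2 (nth 0 t 1))) (nth 0 t 0)) (cpair (elem (pi2 (pi2 (nth 0 t 1))) (nth 0 t 0).+1) (elem (pi1 (pi2 (nth 0 t 1))) (nth 0 t 0)))))) => //.
  + cc.
  + cc.
- apply: (CB_ball (P := fun t => ball (nth 0 t 0) (fun i => wpf (subc (pi1 (pi2 (nth 0 t 1))) (nth 0 t 0) (nth 0 t 0 - i)) == 0))) => //.
  + cc.
  + apply: (CB_ball (P := fun s => wpf (subc (pi1 (pi2 (nth 0 s 2))) (nth 0 s 1) (nth 0 s 1 - nth 0 s 0)) == 0)) => //.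
    * cc.
    * apply: CB_eq; last by cc.
      apply: C_wpf; cc.
- apply: CB_eq; last by cc.
  apply: C_wpf; cc.
Qed.


Lemma mulKg' (G : Type) (mul : G -> G -> G) one inv (HG : is_group mul one inv) x y :
  mul (inv x) (mul x y) = y.
Proof. by rewrite (Defs.mulA HG) (Defs.mulVg HG) (Defs.mul1g HG). Qed.

Lemma mulgV' (G : Type) (mul : G -> G -> G) one inv (HG : is_group mul one inv) x :
  mul x (inv x) = one.
Proof.
set e := mul x (inv x).
have ee : mul e e = e.
  by rewrite /e -(Defs.mulA HG) (mulKg' HG).
by rewrite -(Defs.mulVg HG e) -{3}ee (mulKg' HG).
Qed.

Lemma mulg1' (G : Type) (mul : G -> G -> G) one inv (HG : is_group mul one inv) x :
  mul x one = x.
Proof. by rewrite -(Defs.mulVg HG x) (Defs.mulA HG) (mulgV' HG) (Defs.mul1g HG). Qed.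

Lemma mulKVg' (G : Type) (mul : G -> G -> G) one inv (HG : is_group mul one inv) x y :
  mul x (mul (inv x) y) = y.
Proof. by rewrite (Defs.mulA HG) (mulgV' HG) (Defs.mul1g HG). Qed.

Lemma mulg_canc (G : Type) (mul : G -> G -> G) one inv (HG : is_group mul one inv) x y z :
  mul x y = mul x z -> y = z.
Proof. by move=> E; rewrite -(mulKg' HG x y) E (mulKg' HG). Qed.

Lemma word_val_cat (G : Type) (mul : G -> G -> G) one inv (HG : is_group mul one inv) S w1 w2 :
  word_val mul one inv S (w1 ++ w2) = mul (word_val mul one inv S w1) (word_val mul one inv S w2).
Proof.
elim: w1 => [|l w1 IH] /=; first by rewrite (Defs.mul1g HG).
by rewrite IH (Defs.mulA HG).
Qed.

Lemma word_val_rcons (G : Type) (mul : G -> G -> G) one inv (HG : is_group mul one inv) S w l :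
  word_val mul one inv S (rcons w l) = mul (word_val mul one inv S w) (letter_val one inv S l).
Proof. by rewrite -cats1 (word_val_cat HG) /= (mulg1' HG). Qed.

Lemma word_val_take (G : Type) (mul : G -> G -> G) one inv (HG : is_group mul one inv) S (ls : seq letter) i j :
  i <= j ->
  word_val mul one inv S (take j ls) =
  mul (word_val mul one inv S (take i ls)) (word_val mul one inv S (drop i (take j ls))).
Proof.
by move=> Hij; rewrite -(word_val_cat HG) -(take_takel ls Hij) cat_take_drop.
Qed.

Lemma code_list_inj : injective code_list.
Proof.
elim=> [|x s IH] [|y t] //= [] /cpair_inj [-> /IH ->] //.
Qed.

Lemma code_letter_inj : injective code_letter.
Proof.
case=> [i b] [j c]; rewrite /code_letter /=; case: b; case: c => /= E; try (exfalso; lia); congr pair; lia.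
Qed.

Lemma code_edge_inj : injective code_edge.
Proof.
case=> [[a a'] l] [[b b'] l']; rewrite /code_edge /= => /cpair_inj [-> /cpair_inj [-> /code_letter_inj ->]] //.
Qed.

Lemma code_word_inj : injective code_word.
Proof. move=> w w' /code_list_inj /inj_map E; apply: E; exact: code_letter_inj. Qed.

Definition dl (c : nat) : letter := (c./2, odd c).
Lemma code_dl c : code_letter (dl c) = c.
Proof. rewrite /code_letter /dl /=; have := odd_double_half c; rewrite -muln2; lia. Qed.

Lemma code_graph_surj n : exists B, code_graph B = n.
Proof.
elim/ltn_ind: n => [[|k]] IH; first by exists [::].
have [x [r E]] := cpair_surj k.
have [B HB] : exists B, code_graph B = r.
  apply: IH; rewrite -E; have := cpair_geR x r; lia.
have [a [y Ey]] := cpair_surj x.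
have [a' [c Ec]] := cpair_surj y.
exists ((a, a', dl c) :: B).
by rewrite /code_graph /= -/(code_graph B) HB /code_edge /= code_dl Ec Ey E.
Qed.

Lemma seq_sub (T : Type) (x0 : T) (s : seq T) i j : i <= j -> j <= size s ->
  drop i (take j s) = [seq nth x0 s t | t <- iota i (j - i)].
Proof.
move=> Hij Hj; apply: (@eq_from_nth _ x0).
  by rewrite size_drop size_takel // size_map size_iota.
move=> t; rewrite size_drop size_takel // => Ht'.
rewrite nth_drop nth_take; last by lia.
by rewrite (nth_map 0) ?size_iota // nth_iota.
Qed.

Definition dE : edge := (0, 0, (0, false)).
Definition dL : letter := (0, false).

Lemma subc_word (ls : seq letter) L i j : i <= j -> j <= size ls ->
  (forall t, t < size ls -> elem L t = code_letter (nth dL ls t)) ->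
  subc L j (j - i) = code_word (drop i (take j ls)).
Proof.
move=> Hij Hj H; rewrite subcE ?leq_subr // subKn // (seq_sub dL) //.
rewrite /code_word -map_comp; congr code_list; apply/eq_in_map => t.
rewrite mem_iota => /andP [H1 H2] /=; rewrite H //; lia.
Qed.

Lemma validc_code (G : Type) (S : seq G) l : validc (size S) (code_letter l) = valid_letter S l.
Proof. rewrite /validc /code_letter /valid_letter; case: l => i b /=; apply/idP/idP; case: b => /=; lia. Qed.

Lemma invc_code l : invc (code_letter l) = code_letter (inv_letter l).
Proof.
case: l => i b; rewrite /invc /code_letter /=.
have Ho : odd (2 * i) = false by rewrite mul2n odd_double.
case: b => /=; rewrite oddD Ho /=; lia.
Qed.

Lemma memc_graph B e : memc (code_graph B) (code_edge e) = (e \in B).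
Proof. by rewrite /code_graph memc_code mem_map //; exact: code_edge_inj. Qed.

Lemma tsgb_code (G : Type) (S : seq G) B k :
  ((tlk k (code_graph B) != 0) ==>
   (validc (size S) (pi2 (pi2 (elem (code_graph B) k))) &&
    memc (code_graph B) (edgec (pi1 (pi2 (elem (code_graph B) k))) (pi1 (elem (code_graph B) k))
         (invc (pi2 (pi2 (elem (code_graph B) k))))))) =
  (k < size B) ==> (valid_letter S (nth dE B k).2 &&
       (((nth dE B k).1.2, (nth dE B k).1.1, inv_letter (nth dE B k).2) \in B)).
Proof.
rewrite /code_graph tlk_code code_list0 -size_eq0 size_drop size_map subn_eq0 -ltnNge.
case: ltnP => //= Hk.
rewrite elem_code ?size_map // (nth_map dE) //.
case: (nth dE B k) => [[a a'] l]; rewrite /code_edge /= !pi1_cpair !pi2_cpair pi1_cpair.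
by rewrite validc_code invc_code -memc_graph.
Qed.

Lemma size_graph B : size B <= code_graph B.
Proof. by have := size_code (map code_edge B); rewrite size_map. Qed.

Lemma tsg_spec (G : Type) (S : seq G) B : tsg (size S) (code_graph B) <-> tileset_graph S B.
Proof.
split.
  move/ballP => H; split.
  - move=> e He; have [k Hk Ek] := nthP dE He.
    have := H k (leq_trans Hk (size_graph B)); rewrite tsgb_code Hk /= Ek.
    by case/andP.
  - move=> a a' l He; have [k Hk Ek] := nthP dE He.
    have := H k (leq_trans Hk (size_graph B)); rewrite tsgb_code Hk /= Ek.
    by case/andP.
case=> Hv Hi; apply/ballP => k _; rewrite tsgb_code; apply/implyP => Hk.
have He := mem_nth dE Hk; case: (nth dE B k) He => [[a a'] l] He /=.
by rewrite (Hv _ He) (Hi _ _ _ He).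
Qed.

Lemma wpE (G : Type) (mul : G -> G -> G) one inv S w :
  word_problem mul one inv S (code_word w) <->
  all (valid_letter S) w /\ word_val mul one inv S w = one.
Proof.
split; last by case=> Hv Hw; exists w.
by case=> w' [/code_word_inj <- H].
Qed.

Lemma choice_seq (T : Type) (d : T) (P : nat -> T -> Prop) m :
  (forall i, i < m -> exists x, P i x) -> exists s, size s = m /\ forall i, i < m -> P i (nth d s i).
Proof.
elim: m => [|m IH] H; first by exists [::].
have [s [Hs Hp]] := IH (fun i Hi => H i (ltnW Hi)).
have [x Hx] := H m (ltnSn m).
exists (rcons s x); split; first by rewrite size_rcons Hs.
move=> i Hi; rewrite nth_rcons Hs.
case: (ltngtP i m) => [lt|gt|->]; [exact: Hp | lia | by rewrite ?ltnn ?eqxx].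
Qed.

Lemma acc_sound (G : Type) (mul : G -> G -> G) one inv (HG : is_group mul one inv) S wpf
  (Hw : forall n, (word_problem mul one inv S n /\ wpf n = 1) \/ (~ word_problem mul one inv S n /\ wpf n = 0))
  n w : acc (size S) wpf n w -> ouroboros_problem mul one inv S n.
Proof.
have wpf1 : forall w, wpf (code_word w) = 1 -> all (valid_letter S) w /\ word_val mul one inv S w = one.
  by move=> w' E; case: (Hw (code_word w')) => [[/wpE H _]|[_ E']] //; rewrite E in E'.
have wpf0 : forall w, wpf (code_word w) = 0 -> ~ (all (valid_letter S) w /\ word_val mul one inv S w = one).
  by move=> w' E; case: (Hw (code_word w')) => [[_ E']|[H _]]; [rewrite E in E' | move/wpE].
rewrite /acc; set m := pi1 w; set L := pi1 (pi2 w); set Z := pi2 (pi2 w).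
case/andP => /andP [] /andP [] /andP [] Hm Hts /ballP Hst /ballP Hinj /eqP Hcl.
have [B EB] := code_graph_surj n; subst n.
set ls := mkseq (fun t => dl (elem L t)) m.
have Hsz : size ls = m by rewrite size_mkseq.
have Hnth : forall t, t < m -> nth dL ls t = dl (elem L t) by move=> t Ht; rewrite nth_mkseq.
have HL : forall t, t < size ls -> elem L t = code_letter (nth dL ls t).
  by move=> t; rewrite Hsz => Ht; rewrite Hnth // code_dl.
have Hvalid : forall t, t < m -> valid_letter S (nth dL ls t).
  move=> t Ht; have /andP [Hv _] := Hst t Ht.
  by rewrite -validc_code -HL ?Hsz.
have Hall : all (valid_letter S) ls.
  by apply/(all_nthP dL) => t; rewrite Hsz; exact: Hvalid.
have Hallsub : forall i j, all (valid_letter S) (drop i (take j ls)).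
  by move=> i j; apply/allP => x /mem_drop /mem_take; exact: (allP Hall).
exists B; split => //; split; first exact/tsg_spec.
exists m, (fun i => word_val mul one inv S (take i ls)), (fun t => elem Z t).
split => //; split; [|split].
- have key : forall i j, i < j -> j < m ->
      word_val mul one inv S (take i ls) = word_val mul one inv S (take j ls) -> False.
    move=> i j Hij Hj E.
    have := Hinj j Hj; move/ballP/(_ i Hij)/eqP.
    rewrite (@subc_word ls L i j (ltnW Hij) _ HL); last by rewrite Hsz ltnW.
    move/wpf0; apply; split => //.
    apply: (mulg_canc HG (x := word_val mul one inv S (take i ls))).
    by rewrite -(word_val_take HG _ _ (ltnW Hij)) -E (mulg1' HG).
  move=> i j Hi Hj E; case: (ltngtP i j) => // H.
  + by case: (key i j H Hj E).
  + by case: (key j i H Hi (esym E)).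
- rewrite take0 /= take_oversize ?Hsz //.
  have E0 : subc L m m = subc L m (m - 0) by rewrite subn0.
  have := Hcl; rewrite E0 (@subc_word ls L 0 m _ _ HL) ?Hsz // drop0 take_oversize ?Hsz //.
  by case/wpf1.
- move=> i Hi; exists (nth dL ls i); split; first exact: Hvalid.
  split; first by rewrite (take_nth dL) ?Hsz // (word_val_rcons HG) (mulKg' HG).
  have /andP [_ Hm'] := Hst i Hi.
  rewrite (HL i) ?Hsz // in Hm'.
  by move: Hm'; rewrite -memc_graph.
Qed.

Lemma acc_complete (G : Type) (mul : G -> G -> G) one inv (HG : is_group mul one inv) S wpf
  (Hw : forall n, (word_problem mul one inv S n /\ wpf n = 1) \/ (~ word_problem mul one inv S n /\ wpf n = 0))
  n : ouroboros_problem mul one inv S n -> exists w, acc (size S) wpf n w.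
Proof.
have wpf1 : forall w, all (valid_letter S) w -> word_val mul one inv S w = one -> wpf (code_word w) = 1.
  move=> w' Hv E; case: (Hw (code_word w')) => [[_ ->]|[H _]] //.
  by case: H; apply/wpE.
have wpf0 : forall w, word_val mul one inv S w <> one -> wpf (code_word w) = 0.
  move=> w' Hn; case: (Hw (code_word w')) => [[/wpE [_ H] _]|[_ ->]] //.
case=> B [-> [Hts [m [om [ze [Hm [Hinj [Hcl Hstep]]]]]]]].
have [ls [Hsz Hls]] := choice_seq dL Hstep.
set L := code_list (map code_letter ls).
set Z := code_list (mkseq ze m.+1).
exists (cpair m (cpair L Z)).
rewrite /acc !pi1_cpair !pi2_cpair pi1_cpair.
have HL : forall t, t < size ls -> elem L t = code_letter (nth dL ls t).
  by move=> t Ht; rewrite elem_code ?size_map // (nth_map dL).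
have HZ : forall t, t <= m -> elem Z t = ze t.
  by move=> t Ht; rewrite elem_code ?size_mkseq // nth_mkseq.
have Hom : forall i, i <= m -> om i = mul (om 0) (word_val mul one inv S (take i ls)).
  elim=> [|i IH] Hi; first by rewrite take0 /= (mulg1' HG).
  have [_ [Es _]] := Hls i Hi.
  rewrite (take_nth dL) ?Hsz // (word_val_rcons HG) -Es (Defs.mulA HG) -IH ?(ltnW Hi) //.
  by rewrite (mulKVg' HG).
have Hall : all (valid_letter S) ls.
  by apply/(all_nthP dL) => t; rewrite Hsz => Ht; case: (Hls t Ht).
rewrite Hm /=.
apply/andP; split; [apply/andP; split; [apply/andP; split|]|].
- exact/tsg_spec.
- apply/ballP => i Hi; have [Hv [_ Hb]] := Hls i Hi.
  rewrite (HL i) ?Hsz // (HZ i) ?(ltnW Hi) // (HZ i.+1) // validc_code Hv /=.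
  by move: Hb; rewrite -memc_graph.
- apply/ballP => j Hj; apply/ballP => i Hij; apply/eqP.
  rewrite (@subc_word ls L i j (ltnW Hij) _ HL); last by rewrite Hsz ltnW.
  apply: wpf0 => E.
  have Eij : om i = om j.
    rewrite (Hom i) ?(ltnW (ltn_trans Hij Hj)) // (Hom j) ?(ltnW Hj) //.
    by rewrite (word_val_take HG _ _ (ltnW Hij)) E (mulg1' HG).
  have := Hinj i j (ltn_trans Hij Hj) Hj Eij; lia.
- apply/eqP.
  have E0 : subc L m m = subc L m (m - 0) by rewrite subn0.
  rewrite E0 (@subc_word ls L 0 m _ _ HL) ?Hsz // drop0 take_oversize ?Hsz //.
  apply: wpf1 => //.
  have Hm' := Hom m (leqnn m); rewrite take_oversize ?Hsz // in Hm'.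
  by apply: (mulg_canc HG (x := om 0)); rewrite (mulg1' HG) -Hm' Hcl.
Qed.

Theorem proposition2 (G : Type) (mul : G -> G -> G) (one : G) (inv : G -> G)
  (HG : is_group mul one inv) (S : seq G)
  (HS : generates mul one inv S)
  (HWP : decidable_set (word_problem mul one inv S)) :
  sigma01 (ouroboros_problem mul one inv S).
Proof.
case: HWP => d Hd.
pose wpf n := if excluded_middle_informative (word_problem mul one inv S n) then 1 else 0.
have Hw : forall n, (word_problem mul one inv S n /\ wpf n = 1) \/
                    (~ word_problem mul one inv S n /\ wpf n = 0).
  by move=> n; rewrite /wpf; case: excluded_middle_informative => H; [left|right].
have Cw : C 1 (fun u => wpf (nth 0 u 0)).
  exists d => v; case: v => [|x [|y v]] //= _.
  rewrite /wpf; case: excluded_middle_informative => H; case: (Hd x) => [[P Ev]|[nP Ev]] //.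
have [p Hp] := CB_not (C_acc (size S) Cw).
exists (PMu p) => n; split.
- move/(acc_complete HG Hw) => Hex.
  have Hex' : exists w, (fun w => acc (size S) wpf n w) w by [].
  case: (ex_minnP Hex') => w0 Hacc Hmin.
  exists w0; constructor.
    by have := Hp [:: w0; n] erefl; rewrite /= Hacc.
  move=> k Hk; exists 0.
  have := Hp [:: k; n] erefl; rewrite /=.
  case E: (acc (size S) wpf n k) => //.
  by have := Hmin k E; lia.
- case=> y Hy.
  inversion Hy as [| | | | | |f' v' n' Hz Hl]; subst.
  have := peval_det (Hp [:: y; n] erefl) Hz; rewrite /=.
  case E: (acc (size S) wpf n y) => // _.
  exact: (acc_sound HG Hw E).
Qed.
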